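(* Let $w\in W'(d,2m;\vec 0)$. If $\Phi(\phi(w))=w$, then $\phi(w)\in\overline G_r(U,V;d)$.
   Context: $n,r,d\ge1$, $m=rn$. $U=\{u_1\prec\cdots\prec u_n\}$, $V=\{v_1\prec\cdots\prec v_n\}$. An $r$-regular bipartite multigraph on $(U,V)$ is a multiset of edges $uv$ in which every vertex has degree $r$. Edges $uv,u'v'$ are noncrossing if ($u\prec u'$ and $v\prec v'$) or ($u'\prec u$ and $v'\prec v$); a planar matching is a set of pairwise noncrossing edges; $L(G)$ is its maximum size; $G_r(U,V;d)$ is the set of $r$-regular multigraphs $G$ with $L(G)\le d$. $\overline U=U\times[r]$, $\overline V=V\times[r]$ ordered lexicographically (write $u^s$ for $(u,s)$); noncrossing pairs in $\overline U\times\overline V$ defined the same way. An $r$-configuration is a bijection between $\overline U$ and $\overline V$; a quasi configuration is a partial matching. For $G$ an $r$-regular multigraph, its associated configuration $\overline G$: for each edge $uv$ of multiplicity $t\ge1$, let $i$ be the number of edges $uv'$ (with multiplicity) with $v\prec v'$, $j$ the number of edges $u'v$ with $u\prec u'$; $\overline G$ contains $(u^{i+s},v^{j+t-s+1})$, $s=1,\dots,t$. $\overline G_r(U,V;d)=\{\overline G:G\in G_r(U,V;d)\}$. Walks $w=a_{u_1^1}\cdots a_{u_n^r}|b_{v_1^1}\cdots b_{v_n^r}$ ($a,b\in[d]$) in $\mathbb Z^d$ from the origin with steps $e_{a_{\bar u}}$ ($\bar u$ increasing) then $-e_{b_{\bar v}}$ ($\bar v$ increasing); $W'(d,2m;\vec0)$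 is the set of those ending at the origin with $a_{u^s}\ge a_{u^{s+1}}$ and $b_{v^s}\ge b_{v^{s+1}}$ for all $u\in U,v\in V$, $1\le s<r$. For an $r$-configuration $F$: $a_{\bar u}$ is the maximum size of a set of pairwise noncrossing pairs of $F$ containing the pair $(\bar u,\bar v')\in F$, all of whose pairs $(x,y)$ satisfy $x\preceq\bar u$, $y\preceq\bar v'$; $b_{\bar v}$ symmetrically; $\Phi(F)=a_{u_1^1}\cdots a_{u_n^r}|b_{v_1^1}\cdots b_{v_n^r}$. $A_k(w)=\{\bar u:a_{\bar u}=k\}$, $B_k(w)=\{\bar v:b_{\bar v}=k\}$; connecting equal-size ordered sets $A,B$ in a crossing way: pair the $i$-th smallest of $A$ with the $i$-th largest of $B$; $\phi(w)$: for each $k$, if $|A_k(w)|\ge|B_k(w)|$ connect the $|B_k(w)|$ smallest elements of $A_k(w)$ with $B_k(w)$ in a crossing way, else connect $A_k(w)$ with the $|A_k(w)|$ largest elements of $B_k(w)$ in a crossing way. *)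

(* Defs.v *)
From mathcomp Require Import all_boot all_order.
Set Implicit Arguments. Unset Strict Implicit. Unset Printing Implicit Defensive.

(* Vertices: U = V = 'I_n, ordered by the natural order (u_1 < ... < u_n is
   encoded 0 < ... < n-1).  Copies: Ubar = Vbar = 'I_n * 'I_r, where (u, s)
   encodes u^(s+1), ordered lexicographically. *)
Section Defs.
Variables n r : nat.
Definition pt := ('I_n * 'I_r)%type.

Definition ltL (x y : pt) : bool :=
  (x.1 < y.1) || ((x.1 == y.1) && (x.2 < y.2)).
Definition leL (x y : pt) : bool := (x == y) || ltL x y.

Definition ncpair (p q : pt * pt) : bool :=
  (ltL p.1 q.1 && ltL p.2 q.2) || (ltL q.1 p.1 && ltL q.2 p.2).
Definition pw_nc (S : {set pt * pt}) : bool :=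
  [forall p in S, forall q in S, (p != q) ==> ncpair p q].

Definition regular (G : 'I_n -> 'I_n -> nat) : Prop :=
  (forall u, \sum_(v < n) G u v = r) /\ (forall v, \sum_(u < n) G u v = r).

Definition ncedge (e f : 'I_n * 'I_n) : bool :=
  ((e.1 < f.1) && (e.2 < f.2)) || ((f.1 < e.1) && (f.2 < e.2)).

Definition L_le (G : 'I_n -> 'I_n -> nat) (d : nat) : Prop :=
  forall S : {set 'I_n * 'I_n},
    (forall e, e \in S -> 0 < G e.1 e.2) ->
    (forall e f, e \in S -> f \in S -> e != f -> ncedge e f) ->
    #|S| <= d.

(* associated configuration Gbar: for an edge uv of multiplicity t >= 1,
   i = #{edges uv' : v < v'}, j = #{edges u'v : u < u'}, and Gbar contains
   (u^(i+s), v^(j+t-s+1)), s = 1..t; with 0-based copy indices and s0 = s-1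
   this is ((u, i+s0), (v, j+t-1-s0)), s0 = 0..t-1. *)
Definition assoc_conf (G : 'I_n -> 'I_n -> nat) : {set pt * pt} :=
  [set p : pt * pt |
    let u := p.1.1 in let v := p.2.1 in
    let t := G u v in
    let i := \sum_(v' < n | v < v') G u v' in
    let j := \sum_(u' < n | u < u') G u' v in
    [exists s0 : 'I_r, [&& s0 < t, (p.1.2 : nat) == i + s0
                         & (p.2.2 : nat) == j + t - s0.+1]]].

Definition in_Gbar (d : nat) (F : {set pt * pt}) : Prop :=
  exists G : 'I_n -> 'I_n -> nat, [/\ regular G, L_le G d & assoc_conf G = F].

Definition A_ (a : pt -> nat) (k : nat) : {set pt} := [set x | a x == k].

(* w in W'(d, 2m; 0): letters in [d], the walk ends at the origin (the k-th
   coordinate of the endpoint is #A_k - #B_k), and the letters are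
   weakly decreasing within each block u^1,...,u^r (resp. v^1,...,v^r). *)
Definition inW' (d : nat) (a b : pt -> nat) : Prop :=
  [/\ forall x, 1 <= a x <= d,
      forall y, 1 <= b y <= d,
      forall k, 1 <= k <= d -> #|A_ a k| = #|A_ b k|,
      forall (u : 'I_n) (s s' : 'I_r), s.+1 = s' -> a (u, s') <= a (u, s)
    & forall (v : 'I_n) (s s' : 'I_r), s.+1 = s' -> b (v, s') <= b (v, s)].

Definition rank_lo (A : {set pt}) (x : pt) : nat := #|[set y in A | ltL y x]|.
Definition rank_hi (A : {set pt}) (x : pt) : nat := #|[set y in A | ltL x y]|.

Definition smallest (k : nat) (A : {set pt}) : {set pt} :=
  [set x in A | rank_lo A x < k].
Definition largest (k : nat) (B : {set pt}) : {set pt} :=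
  [set y in B | rank_hi B y < k].

Definition cross_connect (A B : {set pt}) : {set pt * pt} :=
  [set p : pt * pt | [&& p.1 \in A, p.2 \in B & rank_lo A p.1 == rank_hi B p.2]].

Definition phi (d : nat) (a b : pt -> nat) : {set pt * pt} :=
  \bigcup_(k < d.+1 | 0 < k)
    (if #|A_ b k| <= #|A_ a k|
     then cross_connect (smallest #|A_ b k| (A_ a k)) (A_ b k)
     else cross_connect (A_ a k) (largest #|A_ a k| (A_ b k))).

Definition Phi_a (F : {set pt * pt}) (x : pt) : nat :=
  \max_(S : {set pt * pt} | [&& S \subset F, pw_nc S &
        [exists p in S, (p.1 == x) &&
           [forall q in S, leL q.1 p.1 && leL q.2 p.2]]]) #|S|.
Definition Phi_b (F : {set pt * pt}) (y : pt) : nat :=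
  \max_(S : {set pt * pt} | [&& S \subset F, pw_nc S &
        [exists p in S, (p.2 == y) &&
           [forall q in S, leL q.1 p.1 && leL q.2 p.2]]]) #|S|.
End Defs.

(* Main.v *)
Require Import Defs.
From mathcomp Require Import all_boot all_order.
From mathcomp Require Import zify.
Set Implicit Arguments. Unset Strict Implicit. Unset Printing Implicit Defensive.

Section Enc.
Variables n r : nat.
Definition enc (x : pt n r) : nat := x.1 * r + x.2.

Lemma ltLE (x y : pt n r) : ltL x y = (enc x < enc y).
Proof.
rewrite /ltL /enc; have := ltn_ord x.2; have := ltn_ord y.2.
case: (ltngtP x.1 y.1) => h /= hy hx.
- apply/esym; apply/idP; nia.
- have -> : (x.1 == y.1) = false by apply/eqP => e; move: h; rewrite e ltnn.
  rewrite /=; symmetry; apply: negbTE; rewrite -leqNgt; nia.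
- have -> : (x.1 == y.1) = true by apply/eqP/val_inj.
  rewrite h /=; case: (ltngtP x.2 y.2) => h2 /=; lia.
Qed.

Lemma enc_inj : injective enc.
Proof.
move=> x y; rewrite /enc; have := ltn_ord x.2; have := ltn_ord y.2.
case: x => [x1 x2]; case: y => [y1 y2] /= hy hx e.
have e1 : x1 = y1 :> nat.
  case: (ltngtP x1 y1) => h //; nia.
have e2 : x2 = y2 :> nat by move: e; rewrite e1; lia.
by rewrite (val_inj e1) (val_inj e2).
Qed.

Lemma leLE (x y : pt n r) : leL x y = (enc x <= enc y).
Proof.
by rewrite /leL ltLE [RHS]leq_eqVlt (inj_eq (@enc_inj)).
Qed.

Lemma ltL_total (x y : pt n r) : x != y -> ltL x y || ltL y x.
Proof.
rewrite !ltLE => h; case: (ltngtP (enc x) (enc y)) => // /enc_inj e.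
by rewrite e eqxx in h.
Qed.

Lemma ltL_irr (x : pt n r) : ltL x x = false.
Proof. by rewrite ltLE ltnn. Qed.

Lemma rank_hi_inj (B : {set pt n r}) : {in B &, injective (rank_hi B)}.
Proof.
suff H : forall x y, x \in B -> y \in B -> ltL x y -> rank_hi B y < rank_hi B x.
  move=> x y xB yB e; apply/eqP; apply/negP => /negP ne.
  case/orP: (ltL_total ne) => h.
    by have := H _ _ xB yB h; rewrite e ltnn.
  by have := H _ _ yB xB h; rewrite e ltnn.
move=> x y xB yB h; apply: proper_card; apply/properP; split.
  apply/subsetP => z; rewrite !inE => /andP[-> h2] /=.
  by move: h h2; rewrite !ltLE; apply: ltn_trans.
by exists y; rewrite !inE ?xB ?yB ?h // ltL_irr.
Qed.

Lemma rank_lo_inj (A : {set pt n r}) : {in A &, injective (rank_lo A)}.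
Proof.
suff H : forall x y, x \in A -> y \in A -> ltL x y -> rank_lo A x < rank_lo A y.
  move=> x y xB yB e; apply/eqP; apply/negP => /negP ne.
  case/orP: (ltL_total ne) => h.
    by have := H _ _ xB yB h; rewrite e ltnn.
  by have := H _ _ yB xB h; rewrite e ltnn.
move=> x y xB yB h; apply: proper_card; apply/properP; split.
  apply/subsetP => z; rewrite !inE => /andP[-> h2] /=.
  by move: h2 h; rewrite !ltLE; apply: ltn_trans.
by exists x; rewrite !inE ?xB ?yB ?h // ltL_irr.
Qed.

Lemma cc_mem (A B : {set pt n r}) p : p \in cross_connect A B -> p.1 \in A /\ p.2 \in B.
Proof. by rewrite inE => /and3P[]. Qed.

Lemma cc_inj1 (A B : {set pt n r}) p q : p \in cross_connect A B -> q \in cross_connect A B ->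
  p.1 = q.1 -> p = q.
Proof.
rewrite !inE => /and3P[pA pB /eqP ep] /and3P[qA qB /eqP eq] e1.
have e2 : p.2 = q.2 by apply: (rank_hi_inj pB qB); rewrite -ep -eq e1.
by case: p q e1 e2 {ep eq pA pB qA qB} => [? ?] [? ?] /= -> ->.
Qed.

Lemma cc_inj2 (A B : {set pt n r}) p q : p \in cross_connect A B -> q \in cross_connect A B ->
  p.2 = q.2 -> p = q.
Proof.
rewrite !inE => /and3P[pA pB /eqP ep] /and3P[qA qB /eqP eq] e2.
have e1 : p.1 = q.1 by apply: (rank_lo_inj pA qA); rewrite ep eq e2.
by case: p q e1 e2 {ep eq pA pB qA qB} => [? ?] [? ?] /= -> ->.
Qed.
End Enc.

Lemma mono_iter n r (f : pt n r -> nat) :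
  (forall u (s s' : 'I_r), s.+1 = s' -> f (u,s') <= f (u,s)) ->
  forall u (s s' : 'I_r), s <= s' -> f (u,s') <= f (u,s).
Proof.
move=> H u s [m hm]; elim: m hm => [|m IH] hm /= le.
  have -> : Ordinal hm = s by apply/val_inj => /=; lia.
  by [].
case: (ltngtP s m.+1) => h; last first.
- have -> : Ordinal hm = s by apply/val_inj => /=; lia.
  by [].
- lia.
have hm' : m < r by lia.
apply: leq_trans (H u (Ordinal hm') (Ordinal hm) erefl) (IH hm' _) => /=; lia.
Qed.

Lemma max_pos (T : finType) (P : pred T) (f : T -> nat) :
  0 < \max_(i | P i) f i -> exists i, P i.
Proof.
case: (pickP P) => [i Pi | P0]; first by exists i.
by rewrite big_pred0.
Qed.

Lemma max_att (T : finType) (P : pred T) (f : T -> nat) i0 :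
  P i0 -> exists2 i, P i & \max_(j | P j) f j = f i.
Proof.
move=> P0; rewrite (bigmax_eq_arg _ P0).
case: arg_maxnP => // i Pi _; by exists i.
Qed.

Section Main.
Variables n r d : nat.
Variables a b : pt n r -> nat.
Hypothesis hW : inW' d a b.
Hypothesis hPa : forall x, Phi_a (phi d a b) x = a x.
Hypothesis hPb : forall y, Phi_b (phi d a b) y = b y.
Local Notation F := (phi d a b).

Definition CC (k : 'I_d.+1) :=
    (if #|A_ b k| <= #|A_ a k|
     then cross_connect (smallest #|A_ b k| (A_ a k)) (A_ b k)
     else cross_connect (A_ a k) (largest #|A_ a k| (A_ b k))).

Lemma phiP p : p \in F -> exists k : 'I_d.+1, p \in CC k.
Proof. by case/bigcupP => k _ pk; exists k. Qed.

Lemma CC_val k p : p \in CC k -> a p.1 = k /\ b p.2 = k.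
Proof.
rewrite /CC; case: ifP => _ /cc_mem [] ; rewrite !inE.
  by case/andP => /eqP -> _ /eqP ->.
by move=> /eqP -> /andP[/eqP -> _].
Qed.

Lemma M1 p q : p \in F -> q \in F -> p.1 = q.1 -> p = q.
Proof.
case/phiP => k pk; case/phiP => k' qk' e.
have ekk : k = k'.
  apply: ord_inj; by rewrite -(CC_val pk).1 -(CC_val qk').1 e.
subst k'; move: pk qk'; rewrite /CC; case: ifP => _ h1 h2; exact: cc_inj1 h1 h2 e.
Qed.

Lemma M2 p q : p \in F -> q \in F -> p.2 = q.2 -> p = q.
Proof.
case/phiP => k pk; case/phiP => k' qk' e.
have ekk : k = k'.
  apply: ord_inj; by rewrite -(CC_val pk).2 -(CC_val qk').2 e.
subst k'; move: pk qk'; rewrite /CC; case: ifP => _ h1 h2; exact: cc_inj2 h1 h2 e.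
Qed.

Lemma T1 x : exists y, (x, y) \in F.
Proof.
case: hW => ha _ _ _ _.
have : 0 < Phi_a F x by rewrite hPa; case/andP: (ha x).
case/max_pos => S /and3P[sF _ /existsP[p /andP[pS /andP[/eqP px _]]]].
exists p.2; rewrite -px -surjective_pairing; exact: (subsetP sF).
Qed.

Lemma T2 y : exists x, (x, y) \in F.
Proof.
case: hW => _ hb _ _ _.
have : 0 < Phi_b F y by rewrite hPb; case/andP: (hb y).
case/max_pos => S /and3P[sF _ /existsP[p /andP[pS /andP[/eqP px _]]]].
exists p.1; rewrite -px -surjective_pairing; exact: (subsetP sF).
Qed.

Lemma max_pos_att (T : finType) (P : pred T) (f : T -> nat) :
  0 < \max_(i | P i) f i -> exists2 i, P i & \max_(j | P j) f j = f i.
Proof. by case/max_pos => i0 /max_att; apply. Qed.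

Lemma C1 x y x' y' : (x,y) \in F -> (x',y') \in F -> x.1 = x'.1 -> x.2 < x'.2 -> ltL y' y.
Proof.
move=> h1 h2 e1 e2.
have hxx : ltL x x' by rewrite /ltL e1 ltnn eqxx e2 orbT.
have ne : y != y'.
  apply/eqP => eyy; have := M2 h1 h2 eyy; case => exx; by rewrite exx ltL_irr in hxx.
case/orP: (ltL_total ne) => // hyy; exfalso.
case: hW => ha _ _ hma _.
have : 0 < Phi_a F x by rewrite hPa; case/andP: (ha x).
case/max_pos_att => S /= PS eS.
have hS : #|S| = a x by rewrite -hPa; exact: esym eS.
case/and3P: PS => sF pwS /existsP[p /andP[pS /andP[/eqP px top]]].
have ep : p = (x,y) by apply: M1 (subsetP sF _ pS) h1 _; rewrite px.
rewrite ep /= in top; move/forallP: top => top.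
have topq q : q \in S -> leL q.1 x && leL q.2 y := fun qS => implyP (top q) qS.
have lt_top q : q \in S -> ltL q.1 x' && ltL q.2 y'.
  move/topq; rewrite !leLE !ltLE; move: hxx hyy; rewrite !ltLE => u1 u2 /andP[v1 v2].
  by rewrite (leq_ltn_trans v1 u1) (leq_ltn_trans v2 u2).
have nS : (x',y') \notin S.
  by apply/negP => /lt_top /=; rewrite ltL_irr.
have key : #|(x',y') |: S| <= Phi_a F x'.
  apply: leq_bigmax_cond; apply/and3P; split.
  - by rewrite subUset sub1set h2 sF.
  - apply/forallP => p1; apply/implyP => p1S; apply/forallP => q1; apply/implyP => q1S.
    apply/implyP => neq.
    move: p1S q1S neq; rewrite !in_setU1 => /predU1P[-> | p1S] /predU1P[-> | q1S] neq.
    + by rewrite eqxx in neq.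
    + by rewrite /ncpair (lt_top _ q1S) orbT.
    + by rewrite /ncpair (lt_top _ p1S).
    + by move/forallP: pwS => /(_ p1)/implyP/(_ p1S)/forallP/(_ q1)/implyP/(_ q1S)/implyP; apply.
  - apply/existsP; exists (x',y'); rewrite setU11 eqxx /=; apply/forallP => q.
    apply/implyP; rewrite in_setU1 => /predU1P[-> | qS]; first by rewrite /leL !eqxx.
    by case/andP: (lt_top _ qS) => u1 u2; rewrite /leL u1 u2 !orbT.
rewrite hPa cardsU1 nS hS in key.
have m := mono_iter hma x.1 (ltnW e2).
have ex' : (x.1, x'.2) = x' by rewrite e1 -surjective_pairing.
rewrite ex' -surjective_pairing in m; lia.
Qed.

Lemma C2 x y x' y' : (x,y) \in F -> (x',y') \in F -> y.1 = y'.1 -> y.2 < y'.2 -> ltL x' x.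
Proof.
move=> h1 h2 e1 e2.
have hyy : ltL y y' by rewrite /ltL e1 ltnn eqxx e2 orbT.
have ne : x != x'.
  apply/eqP => exx; have := M1 h1 h2 exx; case => _ eyy; by rewrite eyy ltL_irr in hyy.
case/orP: (ltL_total ne) => // hxx; exfalso.
case: hW => _ hb _ _ hmb.
have : 0 < Phi_b F y by rewrite hPb; case/andP: (hb y).
case/max_pos_att => S /= PS eS.
have hS : #|S| = b y by rewrite -hPb; exact: esym eS.
case/and3P: PS => sF pwS /existsP[p /andP[pS /andP[/eqP px top]]].
have ep : p = (x,y) by apply: M2 (subsetP sF _ pS) h1 _; rewrite px.
rewrite ep /= in top; move/forallP: top => top.
have topq q : q \in S -> leL q.1 x && leL q.2 y := fun qS => implyP (top q) qS.
have lt_top q : q \in S -> ltL q.1 x' && ltL q.2 y'.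
  move/topq; rewrite !leLE !ltLE; move: hxx hyy; rewrite !ltLE => u1 u2 /andP[v1 v2].
  by rewrite (leq_ltn_trans v1 u1) (leq_ltn_trans v2 u2).
have nS : (x',y') \notin S.
  by apply/negP => /lt_top /=; rewrite ltL_irr.
have key : #|(x',y') |: S| <= Phi_b F y'.
  apply: leq_bigmax_cond; apply/and3P; split.
  - by rewrite subUset sub1set h2 sF.
  - apply/forallP => p1; apply/implyP => p1S; apply/forallP => q1; apply/implyP => q1S.
    apply/implyP => neq.
    move: p1S q1S neq; rewrite !in_setU1 => /predU1P[-> | p1S] /predU1P[-> | q1S] neq.
    + by rewrite eqxx in neq.
    + by rewrite /ncpair (lt_top _ q1S) orbT.
    + by rewrite /ncpair (lt_top _ p1S).
    + by move/forallP: pwS => /(_ p1)/implyP/(_ p1S)/forallP/(_ q1)/implyP/(_ q1S)/implyP; apply.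
  - apply/existsP; exists (x',y'); rewrite setU11 eqxx /=; apply/forallP => q.
    apply/implyP; rewrite in_setU1 => /predU1P[-> | qS]; first by rewrite /leL !eqxx.
    by case/andP: (lt_top _ qS) => u1 u2; rewrite /leL u1 u2 !orbT.
rewrite hPb cardsU1 nS hS in key.
have m := mono_iter hmb y.1 (ltnW e2).
have ey' : (y.1, y'.2) = y' by rewrite e1 -surjective_pairing.
rewrite ey' -surjective_pairing in m; lia.
Qed.

Lemma card_row u (R : pred 'I_r) : #|[set p in F | (p.1.1 == u) && R p.1.2]| = #|R|.
Proof.
pose g (s : 'I_r) : pt n r * pt n r := ((u,s), xchoose (T1 (u,s))).
have -> : [set p in F | (p.1.1 == u) && R p.1.2] = [set g s | s in R].
  apply/setP => p; rewrite inE; apply/andP/imsetP.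
  - case => pF /andP[/eqP pu Rp]; exists p.1.2 => //.
    apply: M1 pF (xchooseP (T1 _)) _ => /=; by rewrite -pu -surjective_pairing.
  - by case => s Rs ->; split; [exact: (xchooseP (T1 (u,s))) | rewrite /= eqxx /=; exact: Rs].
rewrite (@card_in_imset _ _ g) // => s s' _ _ []; done.
Qed.

Lemma card_col v (R : pred 'I_r) : #|[set p in F | (p.2.1 == v) && R p.2.2]| = #|R|.
Proof.
pose g (s : 'I_r) : pt n r * pt n r := (xchoose (T2 (v,s)), (v,s)).
have -> : [set p in F | (p.2.1 == v) && R p.2.2] = [set g s | s in R].
  apply/setP => p; rewrite inE; apply/andP/imsetP.
  - case => pF /andP[/eqP pu Rp]; exists p.2.2 => //.
    apply: M2 pF (xchooseP (T2 _)) _ => /=; by rewrite -pu -surjective_pairing.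
  - by case => s Rs ->; split; [exact: (xchooseP (T2 (v,s))) | rewrite /= eqxx /=; exact: Rs].
rewrite (@card_in_imset _ _ g) // => s s' _ _ []; done.
Qed.

Lemma card_lt m : m <= r -> #|[pred s : 'I_r | s < m]| = m.
Proof.
move=> h.
have -> : #|[pred s : 'I_r | s < m]| = #|[set widen_ord h s | s in 'I_m]|.
  apply: eq_card => s; rewrite inE; apply/idP/imsetP => [lt | [s' _ ->]].
    by exists (Ordinal lt) => //; apply: val_inj.
  by rewrite /= ltn_ord.
rewrite card_imset ?card_ord // => x y /(congr1 val) /= e; exact: val_inj.
Qed.

Lemma card_or (T : finType) (X : {set T}) (A B : pred T) :
  (forall q, q \in X -> A q -> B q -> False) ->
  #|[set q in X | A q || B q]| = #|[set q in X | A q]| + #|[set q in X | B q]|.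
Proof.
move=> H.
have -> : [set q in X | A q || B q] = [set q in X | A q] :|: [set q in X | B q].
  by apply/setP => q; rewrite !inE andb_orr.
rewrite cardsU; have -> : [set q in X | A q] :&: [set q in X | B q] = set0.
  apply/setP => q; rewrite !inE; apply/negbTE; apply/negP.
  by case/andP => /andP[qX Aq] /andP[_ Bq]; exact: H qX Aq Bq.
by rewrite cards0 subn0.
Qed.

Lemma ltL_same (y y' : pt n r) : y.1 = y'.1 -> ltL y y' = (y.2 < y'.2).
Proof. by move=> e; rewrite /ltL e ltnn eqxx. Qed.

Lemma Eq1 p q : p \in F -> q \in F -> q.1.1 = p.1.1 -> (q.1.2 < p.1.2) = ltL p.2 q.2.
Proof.
move=> pF qF e.
have pF' : (p.1, p.2) \in F by rewrite -surjective_pairing.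
have qF' : (q.1, q.2) \in F by rewrite -surjective_pairing.
apply/idP/idP => [h | h]; first exact: C1 qF' pF' e h.
case: (ltngtP q.1.2 p.1.2) => // c.
  have := C1 pF' qF' (esym e) c; move: h; rewrite !ltLE; lia.
have e1 : q.1 = p.1.
  by case: (q.1) (p.1) e c => [? ?] [? ?] /= -> /val_inj ->.
by rewrite (M1 qF pF e1) ltL_irr in h.
Qed.

Lemma Eq2 p q : p \in F -> q \in F -> q.2.1 = p.2.1 -> (q.2.2 < p.2.2) = ltL p.1 q.1.
Proof.
move=> pF qF e.
have pF' : (p.1, p.2) \in F by rewrite -surjective_pairing.
have qF' : (q.1, q.2) \in F by rewrite -surjective_pairing.
apply/idP/idP => [h | h]; first exact: C2 qF' pF' e h.
case: (ltngtP q.2.2 p.2.2) => // c.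
  have := C2 pF' qF' (esym e) c; move: h; rewrite !ltLE; lia.
have e1 : q.2 = p.2.
  by case: (q.2) (p.2) e c => [? ?] [? ?] /= -> /val_inj ->.
by rewrite (M2 qF pF e1) ltL_irr in h.
Qed.

Definition Gm (u v : 'I_n) := #|[set q in F | (q.1.1 == u) && (q.2.1 == v)]|.
Definition Iu (u v : 'I_n) := #|[set q in F | (q.1.1 == u) && (v < q.2.1)]|.
Definition Jv (u v : 'I_n) := #|[set q in F | (q.2.1 == v) && (u < q.1.1)]|.
Definition S0 (p : pt n r * pt n r) :=
  #|[set q in F | (q.1.1 == p.1.1) && ((q.2.1 == p.2.1) && (q.1.2 < p.1.2))]|.
Definition S1 (p : pt n r * pt n r) :=
  #|[set q in F | (q.2.1 == p.2.1) && ((q.1.1 == p.1.1) && (q.2.2 < p.2.2))]|.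

Lemma pos1 p : p \in F -> p.1.2 = Iu p.1.1 p.2.1 + S0 p :> nat.
Proof.
move=> pF.
have := card_row p.1.1 [pred s : 'I_r | s < p.1.2].
rewrite card_lt; last exact: ltnW (ltn_ord _).
move=> <-.
rewrite /Iu /S0 -card_or; last first.
  by move=> q _ /andP[_ h1] /andP[_ /andP[/eqP h2 _]]; move: h1; rewrite h2 ltnn.
apply: eq_card => q; rewrite !inE /=.
case qF: (q \in F) => //=; case qu: (q.1.1 == p.1.1) => //=.
rewrite (Eq1 pF qF (eqP qu)) /ltL.
case: (ltngtP p.2.1 q.2.1) => h /=.
- by [].
- have -> : (q.2.1 == p.2.1) = false by apply/eqP => e; move: h; rewrite e ltnn.
  have -> : (p.2.1 == q.2.1) = false by apply/eqP => e; move: h; rewrite e ltnn.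
  by [].
- have e : q.2.1 = p.2.1 by apply: val_inj.
  by rewrite e eqxx.
Qed.


Lemma pos2 p : p \in F -> p.2.2 = Jv p.1.1 p.2.1 + S1 p :> nat.
Proof.
move=> pF.
have := card_col p.2.1 [pred s : 'I_r | s < p.2.2].
rewrite card_lt; last exact: ltnW (ltn_ord _).
move=> <-.
rewrite /Jv /S1 -card_or; last first.
  by move=> q _ /andP[_ h1] /andP[_ /andP[/eqP h2 _]]; move: h1; rewrite h2 ltnn.
apply: eq_card => q; rewrite !inE /=.
case qF: (q \in F) => //=; case qu: (q.2.1 == p.2.1) => //=.
rewrite (Eq2 pF qF (eqP qu)) /ltL.
case: (ltngtP p.1.1 q.1.1) => h /=.
- by [].
- have -> : (q.1.1 == p.1.1) = false by apply/eqP => e; move: h; rewrite e ltnn.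
  have -> : (p.1.1 == q.1.1) = false by apply/eqP => e; move: h; rewrite e ltnn.
  by [].
- have e : q.1.1 = p.1.1 by apply: val_inj.
  by rewrite e eqxx.
Qed.

Lemma tri p : p \in F -> Gm p.1.1 p.2.1 = S0 p + 1 + S1 p.
Proof.
move=> pF.
have c1 : #|[set q in F | q == p]| = 1.
  rewrite -(cards1 p); apply: eq_card => q; rewrite !inE.
  by case: eqP => [->|]; [rewrite pF | rewrite andbF].
have E : [set q in F | (q.1.1 == p.1.1) && (q.2.1 == p.2.1)] =
  [set q in F | ((q.1.1 == p.1.1) && ((q.2.1 == p.2.1) && (q.1.2 < p.1.2))) ||
     ((q == p) || ((q.2.1 == p.2.1) && ((q.1.1 == p.1.1) && (q.2.2 < p.2.2))))].
  apply/setP => q; rewrite !inE.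
  case qF: (q \in F) => //=.
  case e1: (q.1.1 == p.1.1); case e2: (q.2.1 == p.2.1) => /=.
  - case: (ltngtP q.1.2 p.1.2) => c //.
      rewrite (Eq1 qF pF (esym (eqP e1))) (ltL_same (eqP e2)) in c.
      by rewrite c !orbT.
    have e : q.1 = p.1.
      by case: (q.1) (p.1) (eqP e1) c => [? ?] [? ?] /= -> /val_inj ->.
    by rewrite (M1 qF pF e) eqxx orbT.
  - by case: eqP => // eqp; rewrite eqp eqxx in e2.
  - by case: eqP => // eqp; rewrite eqp eqxx in e1.
  - by case: eqP => // eqp; rewrite eqp eqxx in e1.
rewrite /Gm E card_or; last first.
  move=> q qF /and3P[/eqP e1 /eqP e2 h1] /orP[/eqP eqp | /and3P[_ _ h2]].
    by move: h1; rewrite eqp ltnn.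
  move: h1; rewrite (Eq1 pF qF e1) (ltL_same (esym e2)) => h1.
  by move: (ltn_trans h1 h2); rewrite ltnn.
rewrite card_or; last first.
  by move=> q qF /eqP eqp /and3P[_ _ h2]; move: h2; rewrite eqp ltnn.
by rewrite c1 addnA.
Qed.

Lemma sum_card_part (X : {set pt n r * pt n r}) (f : pt n r * pt n r -> 'I_n)
  (P : pred 'I_n) (Q : pred (pt n r * pt n r)) :
  \sum_(v < n | P v) #|[set q in X | Q q && (f q == v)]| = #|[set q in X | Q q && P (f q)]|.
Proof.
rewrite -[RHS]sum1_card (partition_big f P) /=; last first.
  by move=> i; rewrite inE => /andP[_ /andP[]].
apply: eq_bigr => v Pv; rewrite -sum1_card; apply: eq_bigl => i; rewrite !inE.
by case: eqP => [->|_]; rewrite ?Pv ?andbT ?andbF.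
Qed.

Lemma Iu_mono (u v v' : 'I_n) : v < v' -> Iu u v' + Gm u v' <= Iu u v.
Proof.
move=> lt; rewrite /Iu /Gm -card_or; last first.
  by move=> q _ /andP[_ h1] /andP[_ /eqP h2]; move: h1; rewrite h2 ltnn.
apply: subset_leq_card; apply/subsetP => q; rewrite !inE.
case/andP => -> /orP[/andP[-> h] | /andP[-> /eqP ->]] /=.
  exact: ltn_trans lt h.
exact: lt.
Qed.

Lemma regG : regular r Gm.
Proof.
split.
- move=> u; rewrite /Gm (sum_card_part F (fun q => q.2.1) xpredT (fun q => q.1.1 == u)).
  have := card_row u xpredT; rewrite /= => ->.
  by apply: (etrans _ (card_ord r)); apply: eq_card => z.
- move=> v.
  have -> : \sum_(u < n) Gm u v = \sum_(u < n) #|[set q in F | (q.2.1 == v) && (q.1.1 == u)]|.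
    by apply: eq_bigr => u _; rewrite /Gm; apply: eq_card => q; rewrite !inE [X in _ && X]andbC.
  rewrite (sum_card_part F (fun q => q.1.1) xpredT (fun q => q.2.1 == v)).
  have := card_col v xpredT; rewrite /= => ->.
  by apply: (etrans _ (card_ord r)); apply: eq_card => z.
Qed.

Lemma LleG : L_le Gm d.
Proof.
move=> S hpos hnc.
case: (set_0Vmem S) => [-> | [e0 e0S]]; first by rewrite cards0.
pose es := [arg max_(e > e0 in S) (e.1 : nat)].
have [esS esmax] : es \in S /\ forall e, e \in S -> e.1 <= es.1.
  by rewrite /es; case: arg_maxnP => // i iS H; split => // e eS; exact: H.
have pick_ok e : e \in S -> exists p, [/\ p \in F, p.1.1 = e.1 & p.2.1 = e.2].
  move=> eS; have := hpos e eS; rewrite /Gm card_gt0 => /set0Pn [p].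
  by rewrite inE => /andP[pF /andP[/eqP h1 /eqP h2]]; exists p.
have [p0 [p0F _ _]] := pick_ok es esS.
pose g e := odflt p0 [pick p in F | (p.1.1 == e.1) && (p.2.1 == e.2)].
have gP e : e \in S -> [/\ g e \in F, (g e).1.1 = e.1 & (g e).2.1 = e.2].
  move=> eS; rewrite /g; case: pickP => [p /andP[pF /andP[/eqP -> /eqP ->]] // | none].
  have [p [pF h1 h2]] := pick_ok e eS; have := none p.
  by rewrite pF h1 h2 !eqxx.
have ginj : {in S &, injective g}.
  move=> e e' eS e'S h; have [_ a1 a2] := gP e eS; have [_ b1 b2] := gP e' e'S.
  by rewrite [e]surjective_pairing [e']surjective_pairing -a1 -a2 -b1 -b2 h.
have hT : #|S| <= Phi_a F (g es).1.
  rewrite -(card_in_imset ginj); apply: leq_bigmax_cond; apply/and3P; split.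
  - by apply/subsetP => p /imsetP[e eS ->]; case: (gP e eS).
  - apply/forallP => p; apply/implyP => /imsetP[e eS ->].
    apply/forallP => q; apply/implyP => /imsetP[e' e'S ->].
    apply/implyP => ne.
    have ne' : e != e' by apply: contraNneq ne => ->.
    have [_ a1 a2] := gP e eS; have [_ b1 b2] := gP e' e'S.
    rewrite /ncpair /ltL a1 a2 b1 b2.
    by case/orP: (hnc e e' eS e'S ne') => /andP[h1 h2]; rewrite h1 h2 ?orbT.
  - apply/existsP; exists (g es); rewrite imset_f // eqxx /=; apply/forallP => q.
    apply/implyP => /imsetP[e eS ->].
    case: (eqVneq e es) => [-> | ne]; first by rewrite /leL !eqxx.
    have [_ a1 a2] := gP e eS; have [_ b1 b2] := gP es esS.
    have := esmax e eS; rewrite /ncedge; case/orP: (hnc e es eS esS ne) => /andP[h1 h2].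
      by rewrite /leL /ltL a1 a2 b1 b2 h1 h2 !orbT.
    by rewrite leqNgt h1.
rewrite hPa in hT; case: hW => ha _ _ _ _; case/andP: (ha (g es).1) => _ hd.
exact: leq_trans hT hd.
Qed.

Lemma sumI (u v : 'I_n) : \sum_(v' < n | v < v') Gm u v' = Iu u v.
Proof. exact: (sum_card_part F (fun q => q.2.1) (fun v' => v < v') (fun q => q.1.1 == u)). Qed.

Lemma sumJ (u v : 'I_n) : \sum_(u' < n | u < u') Gm u' v = Jv u v.
Proof.
have -> : \sum_(u' < n | u < u') Gm u' v =
  \sum_(u' < n | u < u') #|[set q in F | (q.2.1 == v) && (q.1.1 == u')]|.
  by apply: eq_bigr => u' _; rewrite /Gm; apply: eq_card => q; rewrite !inE [X in _ && X]andbC.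
exact: (sum_card_part F (fun q => q.1.1) (fun u' => u < u') (fun q => q.2.1 == v)).
Qed.

Lemma confG : assoc_conf r Gm = F.
Proof.
apply/setP => p; rewrite inE /= sumI sumJ.
apply/existsP/idP.
- case=> s0 /and3P[st /eqP e1 /eqP e2].
  have [y qF] := T1 p.1.
  set q := (p.1, y) in qF.
  have q1 := pos1 qF; have q2 := pos2 qF; have qt := tri qF.
  rewrite /= in q1 q2 qt.
  have E1 : (p.1.2 : nat) = Iu p.1.1 p.2.1 + s0 := e1.
  have E2 : (p.2.2 : nat) = Jv p.1.1 p.2.1 + Gm p.1.1 p.2.1 - s0.+1 := e2.
  have ST : (s0 : nat) < Gm p.1.1 p.2.1 := st.
  have Q1 : (p.1.2 : nat) = Iu p.1.1 y.1 + S0 q := q1.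
  have Q2 : (y.2 : nat) = Jv p.1.1 y.1 + S1 q := q2.
  have QT : Gm p.1.1 y.1 = S0 q + 1 + S1 q := qt.
  clear e1 e2 st q1 q2 qt.
  have ev : y.1 = p.2.1.
    case: (ltngtP y.1 p.2.1) => c; last exact: val_inj.
    + exfalso.
      have m : Iu p.1.1 p.2.1 + Gm p.1.1 p.2.1 <= Iu p.1.1 y.1 := Iu_mono p.1.1 c.
      lia.
    + exfalso.
      have m : Iu p.1.1 y.1 + Gm p.1.1 y.1 <= Iu p.1.1 p.2.1 := Iu_mono p.1.1 c.
      lia.
  rewrite ev in Q1 Q2 QT.
  have ey : y = p.2.
    rewrite [y]surjective_pairing [p.2]surjective_pairing ev; congr pair.
    have H : (y.2 : nat) = p.2.2 by rewrite Q2 E2; lia.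
    exact: val_inj H.
  by rewrite [p]surjective_pairing -ey.
- move=> pF.
  have P1 : (p.1.2 : nat) = Iu p.1.1 p.2.1 + S0 p := pos1 pF.
  have P2 : (p.2.2 : nat) = Jv p.1.1 p.2.1 + S1 p := pos2 pF.
  have PT : Gm p.1.1 p.2.1 = S0 p + 1 + S1 p := tri pF.
  have h : S0 p < r by have := ltn_ord p.1.2; lia.
  exists (Ordinal h); apply/and3P; split => /=.
  - rewrite PT; lia.
  - by rewrite P1.
  - apply/eqP; rewrite P2 PT; set J := Jv _ _; lia.
Qed.
End Main.

Theorem lemma9 (n r d : nat) (a b : pt n r -> nat) :
  1 <= n -> 1 <= r -> 1 <= d ->
  inW' d a b ->
  (forall x, Phi_a (phi d a b) x = a x) ->
  (forall y, Phi_b (phi d a b) y = b y) ->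
  in_Gbar d (phi d a b).
Proof.
move=> _ _ _ hW hPa hPb.
exists (Gm d a b); split.
- exact: (regG hW hPa hPb).
- exact: (LleG hW hPa).
- exact: (confG hW hPa hPb).
Qed.
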